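(* Let $K, L$ be compact convex subsets of $\mathbb{R}^n$ and let $\psi: \mathbb{R}^n \to \mathbb{R}^n$ be a nonsingular linear transformation. Then, for every unit vector $u$, $L_u$ contains a translate of $K_u$ if and only if, for every unit vector $u$, $(\psi L)_u$ contains a translate of $(\psi K)_u$.
   Context: For a set $S \subseteq \mathbb{R}^n$ and a unit vector $u$, $S_u$ denotes the orthogonal projection of $S$ onto the hyperplane $u^\perp$. ''$A$ contains a translate of $B$'' means $B + w \subseteq A$ for some vector $w$ (in $u^\perp$). *)

(* Defs.v *)
From Stdlib Require Import Reals.
From mathcomp Require Import all_boot.
Set Implicit Arguments. Unset Strict Implicit.

Open Scope R_scope.

Definition vec (n : nat) := 'I_n -> R.

Definition vadd n (x y : vec n) : vec n := fun i => x i + y i.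
Definition vscale n (a : R) (x : vec n) : vec n := fun i => a * x i.
Definition vzero n : vec n := fun _ => 0.

Definition dot n (x y : vec n) : R := \big[Rplus/R0]_(i < n) (x i * y i).

Definition unit_vec n (u : vec n) : Prop := dot u u = 1.

Definition proj n (u x : vec n) : vec n := fun i => x i - dot x u * u i.

(* S_u : orthogonal projection of the set S onto u^perp *)
Definition proj_set n (u : vec n) (S : vec n -> Prop) : vec n -> Prop :=
  fun y => exists x, S x /\ y = proj u x.

Definition contains_translate n (u : vec n) (A B : vec n -> Prop) : Prop :=
  exists w : vec n, dot w u = 0 /\ forall y, B y -> A (vadd y w).

Definition image_set n (f : vec n -> vec n) (S : vec n -> Prop) : vec n -> Prop :=
  fun y => exists x, S x /\ y = f x.

Definition convex n (S : vec n -> Prop) : Prop :=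
  forall x y t, 0 <= t <= 1 -> S x -> S y ->
    S (vadd (vscale t x) (vscale (1 - t) y)).

(* convergence of a sequence in R^n (coordinatewise = Euclidean) *)
Definition vconv n (s : nat -> vec n) (l : vec n) : Prop :=
  forall i, Un_cv (fun k => s k i) (l i).

(* compactness in R^n, as sequential compactness (equivalent in R^n) *)
Definition compact_set n (S : vec n -> Prop) : Prop :=
  forall s : nat -> vec n, (forall k, S (s k)) ->
    exists (phi : nat -> nat) (l : vec n),
      (forall k, (phi k < phi (Datatypes.S k))%nat) /\ S l /\ vconv (fun k => s (phi k)) l.

Definition linear_map n (f : vec n -> vec n) : Prop :=
  (forall x y, f (vadd x y) = vadd (f x) (f y)) /\
  (forall a x, f (vscale a x) = vscale a (f x)).

Definition nonsingular n (f : vec n -> vec n) : Prop :=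
  forall x, f x = @vzero n -> x = @vzero n.

(* Main.v *)
Require Import Defs.
From Stdlib Require Import Reals Lra Psatz FunctionalExtensionality.
From mathcomp Require Import all_boot all_algebra.
From mathcomp Require Import Rstruct.
Import GRing.Theory Num.Theory.

Set Implicit Arguments. Unset Strict Implicit.
Open Scope R_scope.

Lemma vec_ext n (x y : vec n) : (forall i, x i = y i) -> x = y.
Proof. exact: functional_extensionality. Qed.

Lemma dotE n (x y : vec n) : dot x y = (\sum_(i < n) (x i * y i))%R.
Proof. reflexivity. Qed.

Lemma dot_addl n (x y u : vec n) : dot (vadd x y) u = dot x u + dot y u.
Proof.
rewrite !dotE; change (Rplus ?a ?b) with (a + b)%R; rewrite -big_split /=.
apply: eq_bigr => i _; rewrite /vadd /=.
apply: Rmult_plus_distr_r.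
Qed.

Lemma dot_scalel n a (x u : vec n) : dot (vscale a x) u = a * dot x u.
Proof.
rewrite !dotE; change (Rmult a ?b) with (a * b)%R; rewrite mulr_sumr.
apply: eq_bigr => i _; rewrite /vscale /=; apply: Rmult_assoc.
Qed.

Lemma dot_proj n (u x v : vec n) : dot (proj u x) v = dot x v - dot x u * dot u v.
Proof.
rewrite /proj !dotE; change (Rminus ?a ?b) with (a - b)%R.
change (Rmult (\sum_(i < n) (x i * u i))%R ?b) with ((\sum_(i < n) (x i * u i)) * b)%R.
rewrite mulr_sumr -sumrB; apply: eq_bigr => i _ /=.
rewrite /GRing.add /GRing.opp /GRing.mul /=.
move: (\big[_/_]_(_ < n) _) => s. rewrite /=. ring.
Qed.

Lemma dot0_eq n (d : vec n) : dot d d = 0 -> d = @vzero n.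
Proof.
rewrite dotE => h; apply: vec_ext => i; rewrite /vzero.
have := @psumr_eq0P _ _ xpredT (fun j => d j * d j)%R (fun j _ => introT RleP (Rle_0_sqr (d j))) h i isT.
by move/Rmult_integral => [].
Qed.

Lemma dot_ge0 n (d : vec n) : 0 <= dot d d.
Proof.
rewrite dotE; apply/RleP; apply: sumr_ge0 => i _; apply/RleP; apply: Rle_0_sqr.
Qed.

Definition Cond n (d : vec n) (A B : vec n -> Prop) : Prop :=
  exists w, forall x, B x -> exists y t, A y /\ vadd x w = vadd y (vscale t d).

Lemma ct_cond n (u : vec n) A B : unit_vec u ->
  contains_translate u (proj_set u A) (proj_set u B) <-> Cond u A B.
Proof.
rewrite /unit_vec => hu; split.
- move=> [w [hw H]]; exists w => x Bx.
  have [y [Ay e]] := H (proj u x) (ex_intro _ x (conj Bx erefl)).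
  exists y, (dot x u - dot y u); split => //; apply: vec_ext => i.
  have := f_equal (fun f => f i) e; rewrite /vadd /proj /vscale => ei.
  nra.
- move=> [w H]; exists (proj u w); split.
    by rewrite dot_proj hu; ring.
  move=> z [x [Bx ->]]; have [y [t [Ay e]]] := H x Bx.
  exists y; split => //.
  have := f_equal (fun f => dot f u) e; rewrite !dot_addl dot_scalel hu => ed.
  apply: vec_ext => i.
  have := f_equal (fun f => f i) e; rewrite /vadd /proj /vscale => ei.
  nra.
Qed.

Lemma cond_unscale n c (d : vec n) A B : Cond (vscale c d) A B -> Cond d A B.
Proof.
move=> [w H]; exists w => x Bx; have [y [t [Ay e]]] := H x Bx.
exists y, (t * c); split => //; rewrite e; apply: vec_ext => i.
rewrite /vadd /vscale; ring.
Qed.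

Lemma cond_scale n c (d : vec n) A B : c <> 0 -> Cond d A B -> Cond (vscale c d) A B.
Proof.
move=> hc h; apply: (@cond_unscale _ (/ c)).
have -> : vscale (/ c) (vscale c d) = d.
  by apply: vec_ext => i; rewrite /vscale; field.
exact: h.
Qed.

Lemma psi0 n (psi : vec n -> vec n) : linear_map psi -> psi (@vzero n) = @vzero n.
Proof.
move=> [ha hs].
have -> : @vzero n = vscale 0 (@vzero n) by apply: vec_ext => i; rewrite /vscale /vzero; ring.
rewrite hs; apply: vec_ext => i; rewrite /vscale /vzero; ring.
Qed.

Lemma psi_inj n (psi : vec n -> vec n) : linear_map psi -> nonsingular psi ->
  forall a b, psi a = psi b -> a = b.
Proof.
move=> [ha hs] hn a b e.
have h0 : vadd a (vscale (-1) b) = @vzero n.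
  apply: hn; rewrite ha hs e; apply: vec_ext => i; rewrite /vadd /vscale /vzero; ring.
apply: vec_ext => i; have := f_equal (fun f => f i) h0; rewrite /vadd /vscale /vzero.
lra.
Qed.

Lemma cond_psi n (psi : vec n -> vec n) d A B : linear_map psi ->
  Cond d A B -> Cond (psi d) (image_set psi A) (image_set psi B).
Proof.
move=> [ha hs] [w H]; exists (psi w) => z [x [Bx ->]].
have [y [t [Ay e]]] := H x Bx.
exists (psi y), t; split; first by exists y.
by rewrite -ha e ha hs.
Qed.

Lemma cond_psi_inv n (psi : vec n -> vec n) d A B : linear_map psi -> nonsingular psi ->
  (forall y, exists x, psi x = y) ->
  Cond (psi d) (image_set psi A) (image_set psi B) -> Cond d A B.
Proof.
move=> hl hn hsur [w' H]; have [w hw] := hsur w'; exists w => x Bx.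
have [y' [t [[y [Ay ->]] e]]] := H (psi x) (ex_intro _ x (conj Bx erefl)).
exists y, t; split => //; apply: (psi_inj hl hn).
case: hl => ha hs; by rewrite ha hw e ha hs.
Qed.

Definition ev n (i : 'I_n) : vec n := fun j => if i == j then R1 else R0.

Lemma psi_sum n (psi : vec n -> vec n) (x : vec n) : linear_map psi ->
  forall s : seq 'I_n,
  psi (fun j => \sum_(i <- s) (x i * ev i j))%R = fun j => (\sum_(i <- s) (x i * psi (ev i) j))%R.
Proof.
move=> hl; have h0 := psi0 hl; case: hl => ha hs.
elim => [|a s IH].
  have -> : (fun j => \sum_(i <- [::]) (x i * ev i j))%R = @vzero n.
    by apply: vec_ext => j; rewrite big_nil.
  rewrite h0; apply: vec_ext => j; by rewrite big_nil.
have -> : (fun j => \sum_(i <- (a :: s)) (x i * ev i j))%R =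
   vadd (vscale (x a) (ev a)) (fun j => \sum_(i <- s) (x i * ev i j))%R.
  by apply: vec_ext => j; rewrite big_cons.
rewrite ha hs IH; apply: vec_ext => j; by rewrite big_cons.
Qed.

Lemma psi_decomp n (psi : vec n -> vec n) (x : vec n) : linear_map psi ->
  psi x = fun j => (\sum_(i < n) (x i * psi (ev i) j))%R.
Proof.
move=> hl; rewrite -(psi_sum x hl); congr psi; apply: vec_ext => j.
rewrite (bigD1 j) //= big1 => [|i /negbTE ne]; rewrite /ev.
  by rewrite eqxx; change (x j = Rplus (Rmult (x j) R1) R0); ring.
by rewrite ne; change (Rmult (x i) R0 = R0); ring.
Qed.

Open Scope ring_scope.
Lemma surj n (psi : vec n -> vec n) : linear_map psi -> nonsingular psi ->
  forall y, exists x, psi x = y.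
Proof.
move=> hl hn.
pose A : 'M[R]_n := (\matrix_(i, j) psi (ev i) j)%R.
have key : forall r : 'rV[R]_n, psi (fun j => r 0 j) = fun j => (r *m A) 0 j.
  move=> r; rewrite (psi_decomp _ hl); apply: vec_ext => j.
  by rewrite mxE; apply: eq_bigr => i _; rewrite mxE.
have hK : kermx A = 0%R.
  apply/matrixP => i j; rewrite [RHS]mxE.
  have e1 : (row i (kermx A) *m A = 0)%R by rewrite -row_mul mulmx_ker row0.
  have := key (row i (kermx A)); rewrite e1 => e2.
  have e3 : psi (fun j => row i (kermx A) 0 j) = @vzero n.
    by rewrite e2; apply: vec_ext => k; rewrite mxE.
  have := hn _ e3.
  by move/(f_equal (fun f => f j)); rewrite mxE.
have hU : A \in unitmx by rewrite -row_free_unit -kermx_eq0 hK.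
move=> y; pose X := ((\row_j y j)%R *m invmx A)%R.
exists (fun j => X 0 j); rewrite key; apply: vec_ext => j.
by rewrite /X mulmxKV // mxE.
Qed.

Open Scope R_scope.

Lemma dot_scale2 n a (x : vec n) : dot (vscale a x) (vscale a x) = a * a * dot x x.
Proof.
rewrite !dotE; change (Rmult (a * a) ?b) with ((a * a) * b)%R; rewrite mulr_sumr.
apply: eq_bigr => i _; rewrite /vscale /=.
rewrite /GRing.mul /=; ring.
Qed.

Lemma normalize n (d : vec n) : d <> @vzero n ->
  exists c, c <> 0 /\ unit_vec (vscale c d).
Proof.
move=> hd; have hD : 0 < dot d d.
  have := dot_ge0 d; case/Rle_lt_or_eq_dec => // h; exfalso; apply: hd; exact: dot0_eq.
have hs : 0 < sqrt (dot d d) by apply: sqrt_lt_R0.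
exists (/ sqrt (dot d d)); split; first by apply: Rinv_neq_0_compat; lra.
rewrite /unit_vec dot_scale2.
have := sqrt_sqrt (dot d d) (Rlt_le _ _ hD) => e.
rewrite -{3}e; field; lra.
Qed.

Lemma unit_nz n (u : vec n) : unit_vec u -> u <> @vzero n.
Proof.
rewrite /unit_vec => hu e; move: hu; rewrite e dotE big1 => [|i _]; rewrite /vzero.
  change (R0 = R1 -> False); lra.
change (Rmult R0 R0 = R0); ring.
Qed.

Theorem proposition4p2 (n : nat) (K L : vec n -> Prop) (psi : vec n -> vec n)
  (hK : compact_set K) (hKc : convex K) (hL : compact_set L) (hLc : convex L)
  (hlin : linear_map psi) (hns : nonsingular psi) :
  (forall u : vec n, unit_vec u ->
     contains_translate u (proj_set u L) (proj_set u K)) <->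
  (forall u : vec n, unit_vec u ->
     contains_translate u (proj_set u (image_set psi L)) (proj_set u (image_set psi K))).
Proof.
split => H v hv.
- have [d hd] := surj hlin hns v.
  have dnz : d <> @vzero n.
    by move=> e; apply: (unit_nz hv); rewrite -hd e psi0.
  have [c [hc hu]] := normalize dnz.
  apply/(ct_cond _ _ hv); rewrite -hd; apply: cond_psi => //.
  apply: (@cond_unscale _ c); apply/(ct_cond _ _ hu); exact: H.
- have pnz : psi v <> @vzero n.
    by move/hns; exact: unit_nz.
  have [c [hc hu]] := normalize pnz.
  apply/(ct_cond _ _ hv); apply: (cond_psi_inv hlin hns (surj hlin hns)).
  apply: (@cond_unscale _ c); apply/(ct_cond _ _ hu); exact: H.
Qed.
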